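(* If $T\in\mathcal{T}_3$ has $n$ vertices then $\mu(T)<\frac{3n-2}{4}$.
   Context: A leaf is a vertex of degree at most 1; an internal vertex has degree at least 2. $\mathcal{T}_3$ is the set of finite trees with at least one internal vertex in which every internal vertex has degree at least 3. A subtree of $T$ is a nonempty vertex set inducing a connected subgraph; $\mu(T)$ is the average number of vertices over all subtrees of $T$. *)

(* Defs.v *)
From mathcomp Require Import all_boot all_order all_algebra.
Set Implicit Arguments. Unset Strict Implicit. Unset Printing Implicit Defensive.
Import Order.TTheory GRing.Theory Num.Theory.

Definition simple_graph (T : finType) (e : rel T) : Prop :=
  symmetric e /\ irreflexive e.

(* Number of (undirected) edges: ordered adjacent pairs counted twice. *)
Definition n_edges (T : finType) (e : rel T) : nat :=
  #|[set p : T * T | e p.1 p.2]| %/ 2.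

Definition is_tree (T : finType) (e : rel T) : Prop :=
  [/\ simple_graph e, 0 < #|T|, (forall x y : T, connect e x y)
    & n_edges e = #|T| - 1].

Definition deg (T : finType) (e : rel T) (x : T) : nat := #|[set y | e x y]|.

(* Internal vertex: degree at least 2; leaf: degree at most 1. *)
Definition internal (T : finType) (e : rel T) (x : T) : bool := 1 < deg e x.

Definition in_T3 (T : finType) (e : rel T) : Prop :=
  [/\ is_tree e, (exists x, internal e x)
    & forall x, internal e x -> 2 < deg e x].

Definition induced (T : finType) (e : rel T) (S : {set T}) : rel T :=
  [rel x y | [&& x \in S, y \in S & e x y]].

Definition is_subtree (T : finType) (e : rel T) (S : {set T}) : bool :=
  (S != set0) && [forall x in S, forall y in S, connect (induced e S) x y].

Definition subtrees (T : finType) (e : rel T) : {set {set T}} :=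
  [set S | is_subtree e S].

Definition mu (T : finType) (e : rel T) : rat :=
  (\sum_(S in subtrees e) #|S|)%:R / (#|subtrees e|)%:R.

(* Main.v *)
Require Import Defs.
From mathcomp Require Import all_boot all_order all_algebra zify.
Set Implicit Arguments. Unset Strict Implicit. Unset Printing Implicit Defensive.

Lemma sum_deg (T : finType) (e : rel T) :
  #|[set p : T * T | e p.1 p.2]| = \sum_x deg e x.
Proof.
rewrite -sum1_card.
rewrite (eq_bigl (fun p : T * T => predT p.1 && e p.1 p.2)); last by move=> p; rewrite !inE.
rewrite -(pair_big_dep predT (fun x y => e x y) (fun _ _ => 1)) /=.
apply: eq_bigr => x _; rewrite /deg -sum1_card; apply: eq_bigl => y; by rewrite inE.
Qed.

Definition swp (T : finType) (p : T * T) := (p.2, p.1).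

Lemma pairs_even (T : finType) (e : rel T) : symmetric e -> irreflexive e ->
  ~~ odd #|[set p : T * T | e p.1 p.2]|.
Proof.
move=> sy ir.
set P := [set p : T * T | e p.1 p.2].
set B := [set p : T * T | enum_rank p.1 < enum_rank p.2].
have E : P :\: B = (@swp T) @: (P :&: B).
  apply/setP => [[x y]]; rewrite !inE /=.
  apply/idP/imsetP.
  - case/andP => nlt exy; exists (y, x) => //; rewrite !inE /= sy exy /=.
    have nxy : x != y by apply: contraTneq exy => ->; rewrite ir.
    have : enum_rank x != enum_rank y by rewrite (inj_eq enum_rank_inj).
    rewrite neq_ltn (negbTE nlt) /=. done.
  - case=> [[a b]]; rewrite !inE /= => /andP[eab lab] [-> ->].
    by rewrite sy eab andbT -leqNgt ltnW.
have inj : injective (@swp T) by case=> a b [c d] [-> ->].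
rewrite -(cardsID B P) E card_imset //. by rewrite addnn odd_double.
Qed.

Lemma leaf_uniq (T : finType) (e : rel T) (w u v : T) : ~~ internal e w -> e w u -> e w v -> u = v.
Proof. rewrite /internal /deg -leqNgt => /card_le1_eqP H eu ev.
by have := H u v; rewrite !inE => /(_ eu ev) ->.
Qed.

Definition Iset (T : finType) (e : rel T) := [set x : T | internal e x].
Definition core (T : finType) (e : rel T) (S : {set T}) := S :&: Iset e.
Definition AL (T : finType) (e : rel T) (C : {set T}) :=
  [set l | ~~ internal e l & [exists c in C, e c l]].
Definition phi (T : finType) (e : rel T) (S : {set T}) :=
  if core e S == set0 then S else core e S :|: (AL e (core e S) :\: S).

Lemma walk (T : finType) (e : rel T) (S : {set T}) y p : symmetric e ->
  y \in S -> internal e y -> path (induced e S) y p ->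
  exists a, [/\ a \in S, internal e a, connect (induced e (core e S)) y a &
     (last y p = a \/ (~~ internal e (last y p) /\ e a (last y p)))].
Proof.
move=> sy yS yI; elim/last_ind: p => [|p z IH].
  by move=> _; exists y; split; [done|done|exact: connect0|by left].
rewrite rcons_path => /andP[/IH [a [aS aI ya H]]]; rewrite last_rcons /=.
case/and3P => wS zS ewz.
case: H => [wa | [wI eaw]].
- case zI: (internal e z).
  + exists z; split; [done|done| |by left].
    apply: (connect_trans ya); apply: connect1.
    by rewrite /induced /= /core /Iset !inE aS aI zS zI -wa ewz.
  + by exists a; split => //; right; split => //; rewrite -wa.
- have za : z = a by apply: (leaf_uniq wI ewz); rewrite sy.
  by exists a; split => //; left.
Qed.

Lemma core_conn (T : finType) (e : rel T) (S : {set T}) u v : symmetric e ->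
  is_subtree e S -> u \in core e S -> v \in core e S ->
  connect (induced e (core e S)) u v.
Proof.
move=> sy /andP[_ /forall_inP H]; rewrite /core /Iset !inE => /andP[uS uI] /andP[vS vI].
have := H u uS => /forall_inP /(_ v vS) /connectP [p pp lp].
have [a [aS aI ua H4]] := walk sy uS uI pp.
rewrite -lp in H4; case: H4 => [-> //|[]]; by rewrite vI.
Qed.

Lemma leaf_in_AL (T : finType) (e : rel T) (S : {set T}) x : symmetric e ->
  is_subtree e S -> core e S != set0 -> x \in S -> ~~ internal e x ->
  x \in AL e (core e S).
Proof.
move=> sy st /set0Pn [y]; rewrite /core /Iset !inE => /andP [yS yI] xS xI.
move: st => /andP[_ /forall_inP H].
have := H y yS => /forall_inP /(_ x xS) /connectP [p pp lp].
have [a [aS aI ua H4]] := walk sy yS yI pp.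
rewrite -lp in H4; case: H4 => [xa|[_ eax]].
  by rewrite xa aI in xI.
rewrite xI /=; apply/exists_inP; exists a => //; by rewrite !inE aS aI.
Qed.

Lemma union_subtree (T : finType) (e : rel T) (C X : {set T}) : symmetric e ->
  C != set0 -> (forall u v, u \in C -> v \in C -> connect (induced e C) u v) ->
  X \subset AL e C -> is_subtree e (C :|: X).
Proof.
move=> sy CN Cconn XA; apply/andP; split.
  by case/set0Pn: CN => c0 c0C; apply/set0Pn; exists c0; rewrite inE c0C.
have sub : forall u v, connect (induced e C) u v -> connect (induced e (C:|:X)) u v.
  move=> u v; apply: connect_sub => a b /and3P [aC bC eab]; apply: connect1.
  by rewrite /induced /= !inE aC bC eab.
have toC : forall u, u \in C :|: X -> exists2 c, c \in C &
    connect (induced e (C :|: X)) u c /\ connect (induced e (C :|: X)) c u.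
  move=> u; rewrite inE => /orP [uC | uX].
    by exists u => //; split; exact: connect0.
  have := subsetP XA u uX; rewrite inE => /andP [_ /exists_inP [c cC ecu]].
  exists c => //; split; apply: connect1; rewrite /induced /= !inE cC uX ?orbT /=.
    by rewrite sy.
  by [].
apply/forall_inP => u uS; apply/forall_inP => v vS.
case: (toC u uS) => c cC [uc _]; case: (toC v vS) => d dC [_ dv].
apply: (connect_trans uc); apply: connect_trans dv; apply: sub; exact: Cconn.
Qed.

Lemma core_phi (T : finType) (e : rel T) (S : {set T}) :
  core e (core e S :|: (AL e (core e S) :\: S)) = core e S.
Proof.
apply/setP=> x; rewrite /core /AL /Iset !inE.
by case: (internal e x); rewrite /= ?andbF ?andbT ?orbF.
Qed.

Lemma phi_subtree (T : finType) (e : rel T) (S : {set T}) : symmetric e ->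
  is_subtree e S -> is_subtree e (phi e S).
Proof.
move=> sy st; rewrite /phi; case: ifP => // /negbT CN; apply: union_subtree => //.
  move=> u v; exact: core_conn.
by apply/subsetP => x; rewrite inE => /andP[_ ->].
Qed.

Lemma phi_invol (T : finType) (e : rel T) (S : {set T}) : symmetric e ->
  is_subtree e S -> phi e (phi e S) = S.
Proof.
move=> sy st; case E: (core e S == set0).
  by rewrite /phi E /= E.
have P1 : phi e S = core e S :|: (AL e (core e S) :\: S) by rewrite /phi E.
rewrite [phi e (phi e S)]/phi P1 core_phi E.
apply/setP => x.
have L := @leaf_in_AL T e S x sy st (negbT E).
move: L; rewrite /core /AL /Iset !inE.
case: (x \in S); case: (internal e x) => //=.
  by move=> ->.
by rewrite andNb.
Qed.

Lemma leaves_bound (T : finType) (e : rel T) : in_T3 e ->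
  #|Iset e| + 2 <= #|~: Iset e| /\ 0 < #|Iset e|.
Proof.
case=> [[[sy ir] n0 conn ne] [y0 y0I] T3].
have deg1 : forall x, ~~ internal e x -> 0 < deg e x.
  move=> x xI; have := conn x y0 => /connectP [[|z p] /= pp ly].
    by move: xI; rewrite -ly y0I.
  case/andP: pp => exz _; apply/card_gt0P; exists z; by rewrite inE.
have A1 : #|Iset e| * 3 <= \sum_(x | internal e x) deg e x.
  rewrite -sum_nat_const (eq_bigl (fun x => internal e x)); last by move=> x; rewrite inE.
  by apply: leq_sum => x xI; apply: T3.
have A2 : #|~: Iset e| * 1 <= \sum_(x | ~~ internal e x) deg e x.
  rewrite -sum_nat_const (eq_bigl (fun x => ~~ internal e x)); last by move=> x; rewrite !inE.
  by apply: leq_sum => x xI; apply: deg1.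
have sd : \sum_x deg e x = \sum_(x | internal e x) deg e x + \sum_(x | ~~ internal e x) deg e x by rewrite (bigID (fun x => internal e x)) /=.
have hd := sum_deg e; have ev := pairs_even sy ir.
move: ne; rewrite /n_edges => ne.
have nT : #|Iset e| + #|~: Iset e| = #|T| by rewrite cardsC.
have m0 : 0 < #|Iset e| by apply/card_gt0P; exists y0; rewrite inE.
have := odd_double_half #|[set p : T * T | e p.1 p.2]|.
rewrite (negbTE ev) add0n -divn2 ne -mul2n => E2.
split => //.
lia.
Qed.

Lemma pair_absurd (T : finType) (e : rel T) (y0 x z : T) : symmetric e ->
  (forall a b, connect e a b) -> internal e y0 -> ~~ internal e x ->
  ~~ internal e z -> e x z -> False.
Proof.
move=> sy conn y0I xI zI exz.
pose a := [pred w | (w == x) || (w == z)].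
have H : forall u v, e u v -> u \in a -> v \in a.
  move=> u v euv; rewrite !inE => /orP [/eqP eu | /eqP eu]; subst u.
    by rewrite (leaf_uniq xI euv exz) eqxx orbT.
  have ezx : e z x by rewrite sy.
  by rewrite (leaf_uniq zI euv ezx) eqxx.
have cl : closed e a.
  move=> u v euv; apply/idP/idP; first exact: H.
  by apply: H; rewrite sy.
have := closed_connect cl (conn x y0); rewrite !inE eqxx /=.
move/esym => /orP [/eqP h | /eqP h]; subst y0.
  by rewrite y0I in xI.
by rewrite y0I in zI.
Qed.

Lemma small_core (T : finType) (e : rel T) (y0 : T) (S : {set T}) : symmetric e ->
  (forall a b, connect e a b) -> internal e y0 -> is_subtree e S ->
  core e S = set0 -> #|S| <= 1.
Proof.
move=> sy conn y0I st C0.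
have NI : forall u, u \in S -> ~~ internal e u.
  move=> u uS; apply/negP => uI.
  have : u \in core e S by rewrite /core /Iset !inE uS uI.
  by rewrite C0 inE.
apply/card_le1_eqP => x y xS yS /=.
case: (eqVneq y x) => // nyx; exfalso.
move: st => /andP[_ /forall_inP H].
have := H x xS => /forall_inP /(_ y yS) /connectP [[|z p] /= pp ly].
  by rewrite ly eqxx in nyx.
case/andP: pp => /and3P [_ zS exz] _.
exact: (pair_absurd sy conn y0I (NI x xS) (NI z zS) exz).
Qed.

Lemma bound (T : finType) (e : rel T) (S : {set T}) : in_T3 e ->
  is_subtree e S -> 2 * (#|S| + #|phi e S|) + 2 <= 3 * #|T|.
Proof.
move=> H3 st; have [lb m0] := leaves_bound H3.
case: H3 => [[[sy ir] n0 conn ne] [y0 y0I] T3].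
have nT : #|Iset e| + #|~: Iset e| = #|T| by rewrite cardsC.
case E: (core e S == set0).
  have s1 := small_core sy conn y0I st (eqP E).
  rewrite /phi E; lia.
have P1 : phi e S = core e S :|: (AL e (core e S) :\: S) by rewrite /phi E.
rewrite P1.
have c1 := cardsID (Iset e) S.
have c2 := cardsU (core e S) (AL e (core e S) :\: S).
have c3 : #|core e S| <= #|Iset e| by rewrite subset_leq_card // subsetIr.
have c4 := cardsU (S :\: Iset e) (AL e (core e S) :\: S).
have c5 : (S :\: Iset e) :&: (AL e (core e S) :\: S) = set0.
  apply/setP => x; rewrite !inE.
  by case: (x \in S); rewrite /= ?andbF.
have c6 : #|(S :\: Iset e) :|: (AL e (core e S) :\: S)| <= #|~: Iset e|.
  apply: subset_leq_card; apply/subsetP => x; rewrite !inE.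
  by case/orP => /andP [] // _ /andP [].
rewrite c5 cards0 in c4.
rewrite /core in c2 c3 c4 c6 *.
lia.
Qed.

From mathcomp Require Import ring lra.
Import Order.TTheory GRing.Theory Num.Theory.

Lemma key_nat (T : finType) (e : rel T) : in_T3 e ->
  0 < #|subtrees e| /\
  4 * (\sum_(S in subtrees e) #|S|) + 2 * #|subtrees e| + 1
    <= #|subtrees e| * (3 * #|T|).
Proof.
move=> H3; have [lb m0] := leaves_bound H3.
have H3' := H3; case: H3' => [[[sy ir] n0 conn ne] [y0 y0I] T3].
have nT : #|Iset e| + #|~: Iset e| = #|T| by rewrite cardsC.
have [x0 x0L] : exists x0, x0 \in ~: Iset e by apply/card_gt0P; lia.
have x0I : ~~ internal e x0 by move: x0L; rewrite !inE.
set S0 := [set x0].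
have S0st : S0 \in subtrees e.
  rewrite /subtrees inE /is_subtree; apply/andP; split.
    by apply/set0Pn; exists x0; rewrite inE.
  apply/forall_inP => u; rewrite inE => /eqP ->.
  apply/forall_inP => v; rewrite inE => /eqP ->; exact: connect0.
have phiS0 : phi e S0 = S0.
  have C0 : core e S0 = set0.
    apply/setP => u; rewrite /core /Iset !inE; case: eqP => // ->.
    by rewrite (negbTE x0I).
  by rewrite /phi C0 eqxx.
pose psi S := if is_subtree e S then phi e S else S.
have psiK : cancel psi psi.
  move=> S; rewrite /psi; case st: (is_subtree e S) => /=.
    by rewrite phi_subtree // phi_invol.
  by rewrite st.
have psiST : forall S, (psi S \in subtrees e) = (S \in subtrees e).
  move=> S; rewrite /subtrees !inE /psi; case: ifP => st.
    by rewrite phi_subtree.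
  by rewrite st.
have Sdup : \sum_(S in subtrees e) #|S| = \sum_(S in subtrees e) #|psi S|.
  rewrite [LHS](reindex_inj (can_inj psiK)); apply: eq_bigl => S.
  by rewrite psiST.
have Hb : \sum_(S in subtrees e) (2 * (#|S| + #|psi S|) + 2) + 1
          <= \sum_(S in subtrees e) 3 * #|T|.
  rewrite (bigD1 S0) //= [X in _ <= X](bigD1 S0) //=.
  have h1 : 2 * (#|S0| + #|psi S0|) + 2 + 1 <= 3 * #|T|.
    rewrite /psi; move: S0st; rewrite inE => ->; rewrite phiS0 cards1; lia.
  have h2 : \sum_(i in subtrees e | i != S0) (2 * (#|i| + #|psi i|) + 2)
            <= \sum_(i in subtrees e | i != S0) 3 * #|T|.
    apply: leq_sum => S /andP [SST _]; rewrite /psi; move: SST; rewrite inE => st.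
    rewrite st; exact: bound.
  by rewrite addnAC; apply: leq_add.
rewrite sum_nat_const big_split /= -big_distrr /= big_split /= -Sdup sum_nat_const in Hb.
split; first by apply/card_gt0P; exists S0.
set X := \sum_(_ in _) #|_| in Hb *. by move: Hb; rewrite (mulnC #|subtrees e| 2) addnn -mul2n mulnA.
Qed.

Local Open Scope ring_scope.

Theorem mainTheorem3 (T : finType) (e : rel T) :
  in_T3 e -> mu e < ((3%:R * (#|T|)%:R - 2%:R) / 4%:R : rat).
Proof.
move=> H3; have [N0 K] := key_nat H3.
rewrite /mu ltr_pdivrMr ?ltr0n //.
move: K; rewrite -(ler_nat rat) !natrD !natrM.
set s := (\sum_(S in subtrees e) #|S|)%:R.
set N := (#|subtrees e|)%:R.
set n := (#|T|)%:R.
move=> K.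
nra.
Qed.
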